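(* Let $R=\mathsf k[x_1,\ldots,x_n]$ and let $I\subseteq R$ be an ideal generated by square-free monomials $m_1,\ldots,m_q$ satisfying $m_b\mid\mathrm{lcm}(m_i:i\in B)$ for every $(b,B)\in\mathcal{D}$, where $\mathcal{D}$ is a finite subset of $[q]\times(2^{[q]}\smallsetminus\{\emptyset\})$. Then: (1) $\psi_I(\varepsilon_{\mathcal{D},i})=\psi_I(\epsilon_i)=m_i$ for all $i\in[q]$; (2) $\psi_I(\varepsilon_{\mathcal{D}}^{\mathbf a})=\mathbf m^{\mathbf a}$ for each $\mathbf a\in\mathcal N^r_q$, $r\ge 1$; (3) $\psi_I(\mathcal{E}_{\mathcal{D}}^r)R=I^r$ for every $r>0$; (4) $\psi_I(\mathrm{lcm}(\varepsilon_{\mathcal{D}}^{\mathbf a_1},\ldots,\varepsilon_{\mathcal{D}}^{\mathbf a_t}))=\mathrm{lcm}(\mathbf m^{\mathbf a_1},\ldots,\mathbf m^{\mathbf a_t})$ for all $r\ge1$, $t\ge1$ and $\mathbf a_1,\ldots,\mathbf a_t\in\mathcal N^r_q$.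
   Context: $S_{[q]}=\mathsf k[y_A:\emptyset\ne A\subseteq[q]]$ over a field $\mathsf k$. $\epsilon_i=\prod_{\emptyset\ne A\subseteq[q],\,i\in A}y_A$. $Q(\mathcal{D})=\{A\subseteq[q]:A\ne\emptyset,\ A\cap B\ne\emptyset\text{ for all }(b,B)\in\mathcal{D}\text{ with }b\in A\}$; $\varepsilon_{\mathcal{D},i}=\prod_{A\in Q(\mathcal{D}),\,i\in A}y_A$; $\mathcal{E}_{\mathcal{D}}=(\varepsilon_{\mathcal{D},1},\ldots,\varepsilon_{\mathcal{D},q})$. $\mathcal N^r_q=\{\mathbf a\in\mathbb N^q:a_1+\dots+a_q=r\}$, $\varepsilon_{\mathcal{D}}^{\mathbf a}=\prod_i\varepsilon_{\mathcal{D},i}^{a_i}$, $\mathbf m^{\mathbf a}=\prod_i m_i^{a_i}$. For $k\in[n]$, $\mathcal A_k=\{j\in[q]:x_k\mid m_j\}$. $\psi_I:S_{[q]}\to R$ is the $\mathsf k$-algebra homomorphism with $\psi_I(y_A)=\prod_{k\in[n],\,\mathcal A_k=A}x_k$ if $A=\mathcal A_k$ for some $k\in[n]$, and $\psi_I(y_A)=1$ otherwise. *)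

(* Defs.v *)
From HB Require Import structures.
From mathcomp Require Import all_boot all_order all_algebra.
From mathcomp Require Import mpoly.
From Stdlib Require Import ClassicalEpsilon.
Set Implicit Arguments. Unset Strict Implicit. Unset Printing Implicit Defensive.
Import Order.TTheory GRing.Theory.
Local Open Scope ring_scope.

Definition decP (P : Prop) : bool :=
  if excluded_middle_informative P then true else false.

Definition rdvd (R : comNzRingType) (p q : R) : Prop := exists c : R, q = c * p.

Definition ideal_gen (R : comNzRingType) (S : R -> Prop) : R -> Prop :=
  fun p => exists (l : seq (R * R)),
    (forall c, c \in l -> S c.2) /\ p = \sum_(c <- l) c.1 * c.2.

Definition ideal_mul (R : comNzRingType) (I J : R -> Prop) : R -> Prop :=
  ideal_gen (fun p => exists a b, I a /\ J b /\ p = a * b).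

Fixpoint ideal_pow (R : comNzRingType) (I : R -> Prop) (r : nat) : R -> Prop :=
  match r with
  | 0 => ideal_gen (fun p => p = 1)
  | r'.+1 => ideal_mul (ideal_pow I r') I
  end.

Definition ideal_ext (A B : comNzRingType) (f : A -> B) (J : A -> Prop) : B -> Prop :=
  ideal_gen (fun p => exists a, J a /\ p = f a).

Definition mono_lcm (k : fieldType) (n : nat) (s : seq {mpoly k[n]}) : {mpoly k[n]} :=
  'X_[foldr (@mlcm n) 0%MM [seq mlead p | p <- s]].

Definition squarefree_monomial (k : fieldType) (n : nat) (p : {mpoly k[n]}) : Prop :=
  exists S : {set 'I_n}, p = \prod_(j in S) 'X_j.

Definition mpow (R : comNzRingType) (q : nat) (m : 'I_q -> R) (a : 'I_q -> nat) : R :=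
  \prod_(i < q) m i ^+ a i.

(* ---------- the ring S_[q] = k[y_A : A nonempty subset of [q]] ---------- *)
Definition NE (q : nat) := {A : {set 'I_q} | A != set0}.
Definition NN (q : nat) : nat := #|{: NE q}|.
Definition Sq (k : fieldType) (q : nat) := {mpoly k[NN q]}.

Definition yvar (k : fieldType) (q : nat) (A : NE q) : Sq k q := 'X_(enum_rank A).

Definition eps (k : fieldType) (q : nat) (i : 'I_q) : Sq k q :=
  \prod_(A : NE q | i \in val A) yvar k A.

Definition inQ (q : nat) (D : {set 'I_q * {set 'I_q}}) (A : {set 'I_q}) : bool :=
  (A != set0) &&
  [forall d in D, (d.1 \in A) ==> (A :&: d.2 != set0)].

Definition veps (k : fieldType) (q : nat) (D : {set 'I_q * {set 'I_q}}) (i : 'I_q)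
  : Sq k q :=
  \prod_(A : NE q | (i \in val A) && inQ D (val A)) yvar k A.

Definition E_D (k : fieldType) (q : nat) (D : {set 'I_q * {set 'I_q}}) : Sq k q -> Prop :=
  ideal_gen (fun p => exists i, p = veps k D i).

Definition Aset (k : fieldType) (n q : nat) (m : 'I_q -> {mpoly k[n]}) (l : 'I_n)
  : {set 'I_q} :=
  [set j | decP (rdvd 'X_l (m j))].

Definition psi_y (k : fieldType) (n q : nat) (m : 'I_q -> {mpoly k[n]}) (A : NE q)
  : {mpoly k[n]} :=
  \prod_(l < n | Aset m l == val A) 'X_l.

Definition psi (k : fieldType) (n q : nat) (m : 'I_q -> {mpoly k[n]}) (p : Sq k q)
  : {mpoly k[n]} :=
  p \mPo [tuple psi_y m (enum_val j) | j < NN q].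

Arguments yvar k {q} A.
Arguments eps k {q} i.
Arguments veps k {q} D i.
Arguments E_D k {q} D _.

(* Main.v *)
Require Import Defs.
From HB Require Import structures.
From mathcomp Require Import all_boot all_order all_algebra.
From mathcomp Require Import mpoly.
From Stdlib Require Import ClassicalEpsilon.
Import Order.TTheory GRing.Theory.
Set Implicit Arguments. Unset Strict Implicit. Unset Printing Implicit Defensive.
Local Open Scope ring_scope.


Lemma dvdX_pos (k : fieldType) (n : nat) (l : 'I_n) (s : 'X_{1..n}) :
  rdvd ('X_l : {mpoly k[n]}) 'X_[s] -> (0 < s l)%N.
Proof.
move=> [c hc]; rewrite lt0n; apply/negP => /eqP sl0.
pose v := fun j : 'I_n => if j == l then (0 : k) else 1.
have := congr1 (meval v) hc.
rewrite mevalM mevalXU mevalX /v eqxx mulr0 big1; first by move/eqP; rewrite oner_eq0.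
by move=> j _; case: eqP => [->|]; rewrite ?sl0 ?expr0 // expr1n.
Qed.

Lemma pos_dvdX (k : fieldType) (n : nat) (l : 'I_n) (s : 'X_{1..n}) :
  (0 < s l)%N -> rdvd ('X_l : {mpoly k[n]}) 'X_[s].
Proof.
move=> hs; exists 'X_[s - U_(l)].
suff {1}-> : s = (s - U_(l) + U_(l))%MM by rewrite mpolyXD.
apply/mnmP => j; rewrite mnmDE mnmBE mnm1E.
by case: (l =P j) => [<-|_] /=; rewrite ?subn1 ?addn1 ?prednK ?subn0 ?addn0.
Qed.

Lemma sqf_X (k : fieldType) (n : nat) (p : {mpoly k[n]}) :
  squarefree_monomial p -> p = 'X_[mlead p] /\ forall l, (mlead p l <= 1)%N.
Proof.
move=> [S ->]; rewrite mprodXE mleadXm; split => // l.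
rewrite mnm_sumE; case: (boolP (l \in S)) => hl.
  rewrite (bigD1 l) //= big1 ?mnm1E ?eqxx // => j /andP [_ hj].
  by rewrite mnm1E (negbTE hj).
by rewrite big1 // => j hj; rewrite mnm1E; case: (j =P l) => // ejl; move: hl; rewrite -ejl hj.
Qed.

Lemma foldr_mlcm_pos (n : nat) (T : eqType) (f : T -> 'X_{1..n}) (r : seq T) l :
  (0 < (foldr (@mlcm n) 0%MM (map f r)) l)%N -> exists2 x, x \in r & (0 < f x l)%N.
Proof.
elim: r => [|x r IH] /=; first by rewrite mnm0E.
rewrite /mlcm mnmE; case: (ltnP 0 (f x l)) => hx.
  by move=> _; exists x => //; rewrite inE eqxx.
move: hx; rewrite leqn0 => /eqP ->; rewrite max0n => /IH [y hy hyl].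
by exists y => //; rewrite inE hy orbT.
Qed.



Definition eqI (R : comNzRingType) (P Q : R -> Prop) := forall x, P x <-> Q x.
Definition prodP (R : comNzRingType) (S T : R -> Prop) : R -> Prop :=
  fun p => exists a b, S a /\ T b /\ p = a * b.
Definition imgP (A B : comNzRingType) (f : A -> B) (S : A -> Prop) : B -> Prop :=
  fun p => exists a, S a /\ p = f a.
Fixpoint powS (R : comNzRingType) (S : R -> Prop) (r : nat) : R -> Prop :=
  match r with 0 => fun p => p = 1 | r'.+1 => prodP (powS S r') S end.

Lemma gen_sub (R : comNzRingType) (S : R -> Prop) x : S x -> ideal_gen S x.
Proof. by move=> Sx; exists [:: (1, x)]; split; [move=> c; rewrite inE => /eqP -> | rewrite big_seq1 mul1r]. Qed.

Lemma gen_ind (R : comNzRingType) (S : R -> Prop) (P : R -> Prop) :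
  P 0 -> (forall x y, P x -> P y -> P (x + y)) -> (forall c x, P x -> P (c * x)) ->
  (forall x, S x -> P x) -> forall x, ideal_gen S x -> P x.
Proof.
move=> P0 PD PM PS x [l [hl ->]]; elim: l hl => [|c l IH] hl; first by rewrite big_nil.
rewrite big_cons; apply: PD; first by apply: PM; apply: PS; apply: hl; rewrite inE eqxx.
by apply: IH => c' hc'; apply: hl; rewrite inE hc' orbT.
Qed.

Lemma gen0 (R : comNzRingType) (S : R -> Prop) : ideal_gen S 0.
Proof. by exists [::]; split => //; rewrite big_nil. Qed.

Lemma genD (R : comNzRingType) (S : R -> Prop) x y :
  ideal_gen S x -> ideal_gen S y -> ideal_gen S (x + y).
Proof.
move=> [l1 [h1 ->]] [l2 [h2 ->]]; exists (l1 ++ l2); split; last by rewrite big_cat.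
by move=> c; rewrite mem_cat => /orP [/h1|/h2].
Qed.

Lemma genM (R : comNzRingType) (S : R -> Prop) c x :
  ideal_gen S x -> ideal_gen S (c * x).
Proof.
move=> [l [h ->]]; exists [seq (c * p.1, p.2) | p <- l]; split.
  by move=> p /mapP [p' /h hp' ->].
by rewrite big_map mulr_sumr; apply: eq_bigr => p _; rewrite mulrA.
Qed.

Lemma gen_mono (R : comNzRingType) (S T : R -> Prop) :
  (forall x, S x -> T x) -> forall x, ideal_gen S x -> ideal_gen T x.
Proof.
move=> hST; apply: gen_ind; [exact: gen0|exact: genD|exact: genM|].
by move=> x /hST; apply: gen_sub.
Qed.

Lemma gen_eq (R : comNzRingType) (S T : R -> Prop) :
  eqI S T -> eqI (ideal_gen S) (ideal_gen T).
Proof. by move=> h x; split; apply: gen_mono => y /h. Qed.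

Lemma genMM (R : comNzRingType) (S T : R -> Prop) a b :
  ideal_gen S a -> ideal_gen T b -> ideal_gen (prodP S T) (a * b).
Proof.
move=> ha hb; move: a ha; apply: gen_ind.
- by rewrite mul0r; apply: gen0.
- by move=> x y hx hy; rewrite mulrDl; apply: genD.
- by move=> c x hx; rewrite -mulrA; apply: genM.
move=> s Ss; move: b hb; apply: gen_ind.
- by rewrite mulr0; apply: gen0.
- by move=> x y hx hy; rewrite mulrDr; apply: genD.
- by move=> c x hx; rewrite mulrCA; apply: genM.
by move=> t Tt; apply: gen_sub; exists s, t.
Qed.

Lemma mul_gen (R : comNzRingType) (S T I J : R -> Prop) :
  eqI I (ideal_gen S) -> eqI J (ideal_gen T) -> eqI (ideal_mul I J) (ideal_gen (prodP S T)).
Proof.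
move=> hI hJ x; split.
  apply: gen_ind; [exact: gen0|exact: genD|exact: genM|].
  by move=> y [a [b [/hI ha [/hJ hb ->]]]]; apply: genMM.
apply: gen_mono => y [a [b [ha [hb ->]]]]; exists a, b; split; first by apply/hI/gen_sub.
by split => //; apply/hJ/gen_sub.
Qed.

Lemma pow_gen (R : comNzRingType) (S : R -> Prop) r :
  eqI (ideal_pow (ideal_gen S) r) (ideal_gen (powS S r)).
Proof.
elim: r => [|r IH] //=; apply: mul_gen => //.
Qed.

Lemma ext_gen (A B : comNzRingType) (f : A -> B) (S : A -> Prop) :
  f 0 = 0 -> (forall x y, f (x + y) = f x + f y) -> (forall x y, f (x * y) = f x * f y) ->
  eqI (ideal_ext f (ideal_gen S)) (ideal_gen (imgP f S)).
Proof.
move=> f0 fD fM x; split.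
  apply: gen_ind; [exact: gen0|exact: genD|exact: genM|].
  move=> y [a [ha ->]]; move: a ha; apply: gen_ind.
  - by rewrite f0; apply: gen0.
  - by move=> u v hu hv; rewrite fD; apply: genD.
  - by move=> c u hu; rewrite fM; apply: genM.
  by move=> u Su; apply: gen_sub; exists u.
by apply: gen_mono => y [a [ha ->]]; exists a; split => //; apply: gen_sub.
Qed.

Lemma ext_eq (A B : comNzRingType) (f : A -> B) (I J : A -> Prop) :
  eqI I J -> eqI (ideal_ext f I) (ideal_ext f J).
Proof.
move=> h; apply: gen_eq => x; split => -[a [ha ->]]; exists a; split => //; exact/h.
Qed.

Lemma prodP_eq (R : comNzRingType) (A A' B B' : R -> Prop) :
  eqI A A' -> eqI B B' -> eqI (prodP A B) (prodP A' B').
Proof.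
move=> hA hB x; split => -[a [b [ha [hb ->]]]]; exists a, b;
  (split; [exact/hA|split; [exact/hB|done]]).
Qed.

Lemma img_pow (A B : comNzRingType) (f : A -> B) (S : A -> Prop) r :
  f 1 = 1 -> (forall x y, f (x * y) = f x * f y) ->
  eqI (imgP f (powS S r)) (powS (imgP f S) r).
Proof.
move=> f1 fM; elim: r => [|r IH] /=.
  by move=> x; split; [move=> [a [-> ->]]|move=> ->; exists 1].
move=> x; split.
  move=> [a [[u [v [hu [hv ->]]]] ->]]; rewrite fM; exists (f u), (f v).
  by split; [apply/IH; exists u|split; [exists v|]].
move=> [a [b [/IH [u [hu ->]] [[v [hv ->]] ->]]]].
by exists (u * v); split; [exists u, v|rewrite fM].
Qed.

Lemma ext_pow (A B : comNzRingType) (f : A -> B) (S : A -> Prop) (M : B -> Prop) r :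
  f 0 = 0 -> f 1 = 1 -> (forall x y, f (x + y) = f x + f y) -> (forall x y, f (x * y) = f x * f y) ->
  eqI (imgP f S) M ->
  eqI (ideal_ext f (ideal_pow (ideal_gen S) r)) (ideal_pow (ideal_gen M) r).
Proof.
move=> f0 f1 fD fM hM x.
rewrite (ext_eq f (pow_gen S r)) (ext_gen _ f0 fD fM) (pow_gen M r).
apply: gen_eq => y; rewrite (img_pow _ _ f1 fM).
have: forall r, eqI (powS (imgP f S) r) (powS M r).
  elim=> [|r' IH] //=; exact: prodP_eq.
by move=> /(_ r y).
Qed.


Definition pickA (k : fieldType) (n q : nat) (m : 'I_q -> {mpoly k[n]}) (l : 'I_n)
  : option 'I_(NN q) := [pick j : 'I_(NN q) | Aset m l == val (enum_val j)].

Definition phi (k : fieldType) (n q : nat) (m : 'I_q -> {mpoly k[n]}) (s : 'X_{1..NN q})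
  : 'X_{1..n} := [multinom (if pickA m l is Some j then s j else 0%N) | l < n].

Lemma psiX (k : fieldType) (n q : nat) (m : 'I_q -> {mpoly k[n]}) s :
  psi m 'X_[s] = 'X_[phi m s].
Proof.
rewrite /psi comp_mpolyX mpolyXE_id.
under eq_bigr => j _ do rewrite tnth_mktuple /psi_y -prodrXl.
rewrite (exchange_big_dep xpredT) //=; apply: eq_bigr => l _.
rewrite /phi mnmE /pickA; case: pickP => [j0 hj0|hn]; last by rewrite big_pred0 ?expr0.
rewrite (big_pred1 j0) // => j /=; apply/idP/idP => [hj|/eqP ->//].
apply/eqP/enum_val_inj/val_inj; rewrite /= -(eqP hj) (eqP hj0) //.
Qed.

Lemma phi0 (k : fieldType) (n q : nat) (m : 'I_q -> {mpoly k[n]}) : phi m 0%MM = 0%MM.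
Proof. by apply/mnmP => l; rewrite mnmE mnm0E; case: pickA => // j; rewrite mnm0E. Qed.

Lemma phiD (k : fieldType) (n q : nat) (m : 'I_q -> {mpoly k[n]}) s t :
  phi m (s + t)%MM = (phi m s + phi m t)%MM.
Proof. by apply/mnmP => l; rewrite mnmDE !mnmE; case: pickA => // j; rewrite mnmDE. Qed.

Lemma phiMn (k : fieldType) (n q : nat) (m : 'I_q -> {mpoly k[n]}) s a :
  phi m (s *+ a)%MM = (phi m s *+ a)%MM.
Proof. by apply/mnmP => l; rewrite mulmnE !mnmE; case: pickA => // j; rewrite mulmnE. Qed.

Lemma phi_lcm (k : fieldType) (n q : nat) (m : 'I_q -> {mpoly k[n]}) s t :
  phi m (mlcm s t) = mlcm (phi m s) (phi m t).
Proof. by apply/mnmP => l; rewrite /mlcm !mnmE; case: pickA => // j; rewrite mnmE. Qed.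

Lemma phi_sum (k : fieldType) (n q : nat) (m : 'I_q -> {mpoly k[n]}) (I : Type) (r : seq I) P F :
  phi m (\sum_(i <- r | P i) F i)%MM = (\sum_(i <- r | P i) phi m (F i))%MM.
Proof. by apply: (big_morph (phi m)); [exact: phiD|exact: phi0]. Qed.

Lemma phi_fold (k : fieldType) (n q : nat) (m : 'I_q -> {mpoly k[n]}) (T : Type) (g : T -> _) r :
  phi m (foldr (@mlcm _) 0%MM (map g r)) = foldr (@mlcm _) 0%MM (map (fun x => phi m (g x)) r).
Proof. by elim: r => [|x r IH] /=; rewrite ?phi0 // phi_lcm IH. Qed.

Lemma sumU (N : nat) (P : pred 'I_N) j0 :
  ((\sum_(j | P j) U_(j))%MM : 'X_{1..N}) j0 = P j0.
Proof.
rewrite mnm_sumE; case: (boolP (P j0)) => hP.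
  rewrite (bigD1 j0) //= big1 ?mnm1E ?eqxx // => j /andP [_ hj].
  by rewrite mnm1E (negbTE hj).
by rewrite big1 // => j hj; rewrite mnm1E; case: (j =P j0) => // ejl; move: hP; rewrite -ejl hj.
Qed.

Lemma prod_yvar (k : fieldType) (q : nat) (P : pred (NE q)) :
  \prod_(A : NE q | P A) yvar k A = 'X_[\sum_(j : 'I_(NN q) | P (enum_val j)) U_(j)].
Proof.
rewrite -mprodXE /yvar (reindex (@enum_rank _)) /=.
  apply: eq_big => [A|A _]; rewrite ?enum_rankK //.
by exists enum_val => x _; [exact: enum_rankK | exact: enum_valK].
Qed.

Lemma Aset_mem (k : fieldType) (n q : nat) (m : 'I_q -> {mpoly k[n]})
  (hsf : forall i, squarefree_monomial (m i)) l i :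
  (i \in Aset m l) = (0 < mlead (m i) l)%N.
Proof.
have [e _] := sqf_X (hsf i); move: e; move: (mlead (m i)) => a e.
rewrite /Aset inE /Defs.decP.
case: excluded_middle_informative => h /=.
  by rewrite e in h; rewrite (dvdX_pos h).
by apply/esym/negP => /(@pos_dvdX k) hd; apply: h; rewrite e.
Qed.

Lemma Aset_Q (k : fieldType) (n q : nat) (m : 'I_q -> {mpoly k[n]}) (D : {set 'I_q * {set 'I_q}})
  (hsf : forall i, squarefree_monomial (m i))
  (hdiv : forall d, d \in D -> rdvd (m d.1) (mono_lcm [seq m i | i in d.2])) l :
  Aset m l != set0 -> inQ D (Aset m l).
Proof.
move=> ne; rewrite /inQ ne /=; apply/forall_inP => d hd; apply/implyP.
rewrite Aset_mem // => hd1.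
have [e _] := sqf_X (hsf d.1).
have [c' hc'] : rdvd ('X_l : {mpoly k[n]}) (m d.1) by rewrite e; apply: pos_dvdX.
have [c hc] := hdiv d hd.
have : rdvd ('X_l : {mpoly k[n]}) (mono_lcm [seq m i | i in d.2]).
  by exists (c * c'); rewrite hc hc' mulrA.
rewrite /mono_lcm => /dvdX_pos; rewrite /image_mem -map_comp.
move=> /foldr_mlcm_pos [x hx hxl]; apply/set0Pn; exists x.
by rewrite inE Aset_mem // hxl; move: hx; rewrite mem_enum.
Qed.

Lemma phi_ind (k : fieldType) (n q : nat) (m : 'I_q -> {mpoly k[n]})
  (hsf : forall i, squarefree_monomial (m i)) (P : pred {set 'I_q}) i :
  (forall l, P (Aset m l) = (i \in Aset m l)) ->
  phi m (\sum_(j : 'I_(NN q) | P (val (enum_val j))) U_(j))%MM = mlead (m i).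
Proof.
move=> HP; apply/mnmP => l; rewrite mnmE /pickA; case: pickP => [j0 /eqP hj0 | hn].
  rewrite sumU /= -hj0 HP Aset_mem //.
  have [_ le1] := sqf_X (hsf i); move: (le1 l); case: (mlead (m i) l) => [|[|]] //.
have : i \notin Aset m l.
  apply/negP => hi; have ne : Aset m l != set0 by apply/set0Pn; exists i.
  by have := hn (enum_rank (exist (fun A => A != set0) (Aset m l) ne : NE q)); rewrite enum_rankK /= eqxx.
by rewrite Aset_mem // -eqn0Ngt => /eqP ->.
Qed.


Lemma psi_mpow (k : fieldType) (n q : nat) (m : 'I_q -> {mpoly k[n]}) (f : 'I_q -> Sq k q) a :
  psi m (mpow f a) = \prod_(i < q) psi m (f i) ^+ a i.
Proof. by rewrite /mpow /psi rmorph_prod; apply: eq_bigr => i _; rewrite rmorphXn. Qed.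

Lemma mpowX (k : fieldType) (n q : nat) (f : 'I_q -> {mpoly k[n]}) a :
  (forall i, f i = 'X_[mlead (f i)]) -> mpow f a = 'X_[\sum_(i < q) (mlead (f i) *+ a i)%MM].
Proof. by move=> H; rewrite /mpow -mprodXnE; apply: eq_bigr => i _; rewrite -H. Qed.

Unset Implicit Arguments.

Theorem proposition4p2 (k : fieldType) (n q : nat)
  (m : 'I_q -> {mpoly k[n]}) (D : {set 'I_q * {set 'I_q}})
  (hsf : forall i, squarefree_monomial (m i))
  (hD : forall d, d \in D -> d.2 != set0)
  (hdiv : forall d, d \in D ->
      rdvd (m d.1) (mono_lcm [seq m i | i in d.2])) :
  (* (1) *)
  (forall i : 'I_q, psi m (veps k D i) = psi m (eps k i) /\ psi m (eps k i) = m i) /\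
  (* (2) *)
  (forall (r : nat) (a : 'I_q -> nat), (1 <= r)%N -> (\sum_(i < q) a i)%N = r ->
      psi m (mpow (veps k D) a) = mpow m a) /\
  (* (3) *)
  (forall r : nat, (0 < r)%N ->
      forall p, ideal_ext (psi m) (ideal_pow (E_D k D) r) p <->
                ideal_pow (ideal_gen (fun f => exists i, f = m i)) r p) /\
  (* (4) *)
  (forall (r t : nat) (a : 'I_t -> 'I_q -> nat), (1 <= r)%N -> (1 <= t)%N ->
      (forall j, (\sum_(i < q) a j i)%N = r) ->
      psi m (mono_lcm [seq mpow (veps k D) (a j) | j : 'I_t])
      = mono_lcm [seq mpow m (a j) | j : 'I_t]).
Proof.
have hev i : phi m (mlead (veps k D i)) = mlead (m i).
  rewrite /veps prod_yvar mleadXm (@phi_ind _ _ _ _ hsf (fun A => (i \in A) && inQ D A) i) // => l.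
  case hi: (i \in Aset m l) => //=; apply: (Aset_Q hsf hdiv).
  by apply/set0Pn; exists i.
have hee i : phi m (mlead (eps k i)) = mlead (m i).
  by rewrite /eps prod_yvar mleadXm (@phi_ind _ _ _ _ hsf (fun A => (i \in A)) i).
have hvX i : veps k D i = 'X_[mlead (veps k D i)] by rewrite /veps prod_yvar mleadXm.
have heX i : eps k i = 'X_[mlead (eps k i)] by rewrite /eps prod_yvar mleadXm.
have hmX i : m i = 'X_[mlead (m i)] := (sqf_X (hsf i)).1.
have h1 i : psi m (veps k D i) = m i by rewrite hvX psiX hev -hmX.
have h1' i : psi m (eps k i) = m i by rewrite heX psiX hee -hmX.
split; first by move=> i; rewrite h1 h1'.
split; first by move=> r a _ _; rewrite psi_mpow /mpow; apply: eq_bigr => i _; rewrite h1.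
split.
  move=> r _ p; apply: (ext_pow (S := fun p => exists i, p = veps k D i)).
  - by rewrite /psi rmorph0.
  - by rewrite /psi rmorph1.
  - by move=> x y; rewrite /psi rmorphD.
  - by move=> x y; rewrite /psi rmorphM.
  move=> x; split; first by move=> [a [[i ->] ->]]; exists i; rewrite h1.
  by move=> [i ->]; exists (veps k D i); split; [exists i|rewrite h1].
move=> r t a _ _ _.
rewrite /mono_lcm psiX phi_fold /image_mem -!map_comp.
congr (mpolyX _ (foldr _ _ _)); apply: eq_map => j /=.
rewrite (mpowX _ hvX) (mpowX _ hmX) !mleadXm phi_sum; apply: eq_bigr => i _.
by rewrite phiMn hev.
Qed.
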